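(* Let $G=(V,E)$ be a network and consider an $\mathbb{F}_q$-valued rate-$\omega$ LNEC code on $G$, as in the context. Let $t\in T$ be a sink node with $\dim\Phi(t)=\omega$, and let $r$ be a nonnegative integer with $r\le C_t$. Then the code corrects at $t$ any error vector in $\mathcal{Z}(\mathcal{A}_t(r))$ if and only if it corrects at $t$ any error vector in $\mathcal{Z}(\mathcal{E}_t(r))$.
   Context: Network: $G=(V,E)$ is a finite directed acyclic graph (parallel edges allowed) with a single source node $s$ and a set of sink nodes $T\subseteq V\setminus\{s\}$; $s$ has no incoming edges and sink nodes have no outgoing edges. For an edge $e$, $\mathrm{tail}(e)$, $\mathrm{head}(e)$ are its tail and head; $\mathrm{In}(v)$, $\mathrm{Out}(v)$ are the incoming/outgoing edge sets of node $v$. A directed path is a sequence of edges $(e_1,\dots,e_m)$, $m\ge1$, with $\mathrm{tail}(e_{k+1})=\mathrm{head}(e_k)$. A cut separating node $v$ from node $u$ is a set of edges whose removal leaves no directed path from $u$ to $v$; $C_t$ is the minimum size of a cut separating sink $t$ from $s$. LNEC code: with rate $\omega\ge1$ and finite field $\mathbb{F}_q$, introduce imaginary source edges $d_1',\dots,d_\omega'$ ending at $s$ with $\mathrm{In}(s)=\{d_1',\dots,d_\omega'\}$, and for each $e\in E$ an imaginary error edge $e'$ with head $\mathrm{tail}(e)$; $E'=\{e':e\in E\}$ (for non-source nodes, $\mathrm{In}(v)$ contains only edges of $E$). The code is given by local encoding coefficients $k_{d,e}\in\mathbb{F}_q$ for $e\in E$, $d\in\mathrm{In}(\mathrm{tail}(e))$.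 Extended global encoding kernels are vectors in $\mathbb{F}_q^{\omega+|E|}$ indexed by $\{d_i'\}\cup E'$: $\tilde f_{d_i'}=1_{d_i'}$, $\tilde f_{e'}=1_{e'}$ (standard basis vectors), and recursively in topological order $\tilde f_e=\sum_{d\in\mathrm{In}(\mathrm{tail}(e))}k_{d,e}\tilde f_d+1_{e'}$. For sink $t$, $\mathrm{row}_t(d')=(\tilde f_{\hat e}(d'):\hat e\in\mathrm{In}(t))$, and $\Phi(t)=\langle\mathrm{row}_t(d_i'):1\le i\le\omega\rangle$. Error correction: an error vector $z=(z_e:e\in E)\in\mathbb{F}_q^{|E|}$ matches $\xi\subseteq E$ if $z_e=0$ for all $e\notin\xi$. For a source message $x\in\mathbb{F}_q^\omega$ and error vector $z$, the received vector at $t$ is $\tilde y_t(x,z)=(x\ z)\cdot\tilde F_t$ where $\tilde F_t=[\tilde f_e:e\in\mathrm{In}(t)]$. For a set $\mathcal{Z}$ of error vectors, the code corrects at $t$ any error vector in $\mathcal{Z}$ if for all $x,x'\in\mathbb{F}_q^\omega$ and $z,z'\in\mathcal{Z}$, $\tilde y_t(x,z)=\tilde y_t(x',z')$ implies $x=x'$. For a collection $\mathcal{C}$ of edge subsets, $\mathcal{Z}(\mathcal{C})=\{z\in\mathbb{F}_q^{|E|}: z\text{ matches some }\xi\in\mathcal{C}\}$. Graph notions: for $\xi\subseteq E$ and a node $u$, $A\subseteq E$ is a cut separating $u$ from $\xi$ if every directed path in $G$ whose first edge lies in $\xi$ and whose last edge has head $u$ contains an edge of $A$. $\mathrm{mincut}(\xi,u)$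 is the minimum size of such a cut. A minimum cut separating $u$ from $\xi$ is primary if it separates $u$ from every minimum cut separating $u$ from $\xi$; it exists and is unique. $\xi$ is primary for $u$ if $\xi$ is the primary minimum cut separating $u$ from $\xi$. $\mathcal{E}_t(r)=\{\xi\subseteq E:\mathrm{mincut}(\xi,t)\le r\}$, $\mathcal{A}_t(r)=\{\xi\subseteq E:|\xi|=r,\ \xi\text{ primary for }t\}$. *)

(* Defs.v *)
From mathcomp Require Import all_boot all_order all_algebra all_field.
Set Implicit Arguments. Unset Strict Implicit. Unset Printing Implicit Defensive.
Import GRing.Theory.
Local Open Scope ring_scope.

(* A network: node type V, edge type E (parallel edges allowed), with
   tail/head maps.  All notions below are parameterised by these maps. *)
Section Network.
Variables (V E : finType) (tail head : E -> V).

Definition dpath (e0 : E) (p : seq E) : bool :=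
  path (fun a b => tail b == head a) e0 p.

Definition acyclic : Prop :=
  forall e0 p, dpath e0 p -> head (last e0 p) != tail e0.

Definition network (s : V) (T : {set V}) : Prop :=
  [/\ acyclic, s \notin T,
      (forall e, head e != s) & (forall e, tail e \notin T)].

Definition node_cut (A : {set E}) (u v : V) : Prop :=
  forall e0 p, dpath e0 p -> tail e0 = u -> head (last e0 p) = v ->
    has (mem A) (e0 :: p).

Definition cut_from (A xi : {set E}) (u : V) : Prop :=
  forall e0 p, dpath e0 p -> e0 \in xi -> head (last e0 p) = u ->
    has (mem A) (e0 :: p).

Definition min_size (P : {set E} -> Prop) (m : nat) : Prop :=
  (exists A, P A /\ #|A| = m) /\ (forall A, P A -> (m <= #|A|)%N).

Definition is_Ct (s t : V) (c : nat) : Prop := min_size (fun A => node_cut A s t) c.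

Definition is_mincut (xi : {set E}) (u : V) (m : nat) : Prop :=
  min_size (fun A => cut_from A xi u) m.

Definition min_cut_from (A xi : {set E}) (u : V) : Prop :=
  cut_from A xi u /\ (forall B, cut_from B xi u -> (#|A| <= #|B|)%N).

Definition primary_cut (A xi : {set E}) (u : V) : Prop :=
  min_cut_from A xi u /\ (forall B, min_cut_from B xi u -> cut_from A B u).

Definition primary_for (xi : {set E}) (u : V) : Prop := primary_cut xi xi u.

Definition E_t (t : V) (r : nat) (xi : {set E}) : Prop :=
  exists m, is_mincut xi t m /\ (m <= r)%N.

Definition A_t (t : V) (r : nat) (xi : {set E}) : Prop :=
  #|xi| = r /\ primary_for xi t.

(* LNEC codes.  Coordinates of extended global encoding kernels are indexed by
   'I_w + E : inl i stands for d_i', inr e for the error edge e'. *)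
Variables (F : fieldType) (w : nat).

Definition unitv (j0 j : 'I_w + E) : F := if j == j0 then 1 else 0.

(* f is the family of extended global encoding kernels of the code with local
   coefficients k d e (d in E, head d = tail e) and ks i e = k_{d_i', e}
   (used when tail e = s); In(s) = {d_1',...,d_w'} and In(v) (v <> s) consists
   of the real edges with head v. *)
Definition is_gek (s : V) (ks : 'I_w -> E -> F) (k : E -> E -> F)
    (f : E -> 'I_w + E -> F) : Prop :=
  forall e j,
    f e j = (if tail e == s then \sum_(i < w) ks i e * unitv (inl i) j
             else \sum_(d | head d == tail e) k d e * f d j)
            + unitv (inr e) j.

(* Phi(t): the row space spanned by row_t(d_i'), written as a w x |E| matrix whose
   column for edge e is (f_e(d_i'))_i if e in In(t) and 0 otherwise (zero columns
   do not change the dimension). *)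
Definition Phi_mx (f : E -> 'I_w + E -> F) (t : V) : 'M[F]_(w, #|E|) :=
  \matrix_(i < w, j < #|E|)
    (let e := enum_val j in if head e == t then f e (inl i) else 0).

Definition received (f : E -> 'I_w + E -> F) (x : {ffun 'I_w -> F})
    (z : {ffun E -> F}) (e : E) : F :=
  \sum_(i < w) x i * f e (inl i) + \sum_(d : E) z d * f e (inr d).

Definition matches (z : {ffun E -> F}) (xi : {set E}) : Prop :=
  forall e, e \notin xi -> z e = 0.

Definition Zset (C : {set E} -> Prop) (z : {ffun E -> F}) : Prop :=
  exists xi, C xi /\ matches z xi.

Definition corrects (f : E -> 'I_w + E -> F) (t : V)
    (Z : {ffun E -> F} -> Prop) : Prop :=
  forall x x' z z', Z z -> Z z' ->
    (forall e, head e = t -> received f x z e = received f x' z' e) -> x = x'.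

End Network.

(* Main.v *)
Require Import Defs.
From mathcomp Require Import all_boot all_order all_algebra all_field.
From Stdlib Require Import ClassicalEpsilon Classical.
From mathcomp Require Import zify.
Set Implicit Arguments. Unset Strict Implicit. Unset Printing Implicit Defensive.

Definition pb (P : Prop) : bool := if excluded_middle_informative P then true else false.
Lemma pbP (P : Prop) : reflect P (pb P).
Proof. rewrite /pb; case: excluded_middle_informative => H; by constructor. Qed.

Section Graph.
Variables (V E : finType) (tail head : E -> V) (t : V).
Local Notation dp := (dpath tail head).
Local Notation cutf := (cut_from tail head).

Lemma dp_suffix e0 p x : dp e0 p -> x \in e0 :: p ->
  exists q, [/\ dp x q, last x q = last e0 p & {subset x :: q <= e0 :: p}].
Proof.
move=> Hp; rewrite inE; case/orP=> [/eqP->|xp]; first by exists p; split.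
case/splitPr: xp Hp => [p1 p2] Hp; exists p2; split.
- by move: Hp; rewrite /dpath cat_path /= => /and3P[].
- by rewrite last_cat.
- by move=> y Hy; rewrite inE mem_cat Hy !orbT.
Qed.

Lemma cut_trans (A B X : {set E}) : cutf A X t -> cutf B A t -> cutf B X t.
Proof.
move=> HA HB e0 p Hp e0X Hl.
case/hasP: (HA e0 p Hp e0X Hl) => a aI aA.
case: (dp_suffix Hp aI) => q [Hq Hlq Hsub].
case/hasP: (HB a q Hq aA (etrans (congr1 head Hlq) Hl)) => b bI bB.
by apply/hasP; exists b => //; apply: Hsub.
Qed.

Lemma cut_self (X : {set E}) : cutf X X t.
Proof. by move=> e0 p _ H _; rewrite /= H. Qed.

Lemma cut_mono (A A' X : {set E}) : A \subset A' -> cutf A X t -> cutf A' X t.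
Proof.
move=> sub H e0 p Hp e0X Hl; case/hasP: (H e0 p Hp e0X Hl) => a aI aA.
by apply/hasP; exists a => //; apply: (subsetP sub).
Qed.

Lemma cut_monoX (A X X' : {set E}) : X \subset X' -> cutf A X' t -> cutf A X t.
Proof. by move=> sub H e0 p Hp e0X; apply: H => //; apply: (subsetP sub). Qed.

Definition Nset (C : {set E}) : {set E} :=
  [set e | pb (exists p, [/\ dp e p, head (last e p) = t & ~~ has (mem C) (e :: p)])].

Definition bd (Z : {set E}) : {set E} :=
  [set e | (e \notin Z) && ((head e == t) || [exists e', (e' \in Z) && (tail e' == head e)])].

Lemma cut_Nset (C Y : {set E}) y : cutf C Y t -> y \in Y -> y \notin Nset C.
Proof.
move=> H yY; rewrite inE; apply/pbP => -[p [Hp Hl Hn]].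
by move: (H y p Hp yY Hl); rewrite (negbTE Hn).
Qed.

Lemma bd_sub (C : {set E}) : bd (Nset C) \subset C.
Proof.
apply/subsetP => e; rewrite inE => /andP[eN H].
apply/negPn/negP => eC; move: eN; rewrite inE => /pbP; apply.
case/orP: H => [/eqP Ht | /existsP[e' /andP[]]].
  by exists [::]; split => //=; rewrite /= (negbTE eC).
rewrite inE => /pbP[p [Hp Hl Hn]] /eqP Hte.
exists (e' :: p); split => //.
  by rewrite /dpath /= Hte eqxx.
by rewrite /= (negbTE eC).
Qed.

Lemma bd_cut (Z Y : {set E}) : [disjoint Y & Z] -> cutf (bd Z) Y t.
Proof.
move=> dis e0 p Hp e0Y Hl.
have : e0 \notin Z by rewrite (disjointFr dis e0Y).
elim: p e0 Hp Hl {e0Y} => [|e1 p IH] e0 Hp Hl e0Z.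
  by rewrite /= inE e0Z /= Hl eqxx.
case e1Z: (e1 \in Z).
  move: Hp; rewrite /dpath /= => /andP[/eqP He1 _].
  rewrite /= inE e0Z /=; apply/orP; left; apply/orP; right.
  by apply/existsP; exists e1; rewrite e1Z He1 eqxx.
move: Hp; rewrite /dpath /= => /andP[_ Hp].
have := IH e1 Hp Hl; rewrite e1Z => /(_ isT) /= ->; exact: orbT.
Qed.

Lemma bd_submod (Z1 Z2 : {set E}) :
  (#|bd (Z1 :|: Z2)| + #|bd (Z1 :&: Z2)| <= #|bd Z1| + #|bd Z2|)%N.
Proof.
rewrite -cardsUI -[X in (_ <= X)%N]cardsUI leq_add //; apply: subset_leq_card;
  apply/subsetP => e; rewrite !inE.
- case/orP => /andP[eZ H].
    move: eZ; rewrite negb_or => /andP[e1 e2]; rewrite e1 e2 /=.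
    case/orP: H => [-> //|/existsP[e' /andP[]]]; rewrite inE => /orP[] He' Ht.
      by apply/orP; left; apply/orP; right; apply/existsP; exists e'; rewrite He'.
    by apply/orP; right; apply/orP; right; apply/existsP; exists e'; rewrite He'.
  move: eZ; rewrite negb_and => /orP[] ->; case/orP: H => [->|/existsP[e' /andP[]]] //=;
    rewrite ?orbT // inE => /andP[h1 h2] h3.
    by apply/orP; left; apply/orP; right; apply/existsP; exists e'; rewrite h1 h3.
  by apply/orP; right; apply/orP; right; apply/existsP; exists e'; rewrite h2 h3.
- case/andP => /andP[eZ H] /andP[_ H'].
  move: eZ; rewrite negb_or => /andP[e1 e2]; rewrite e1 e2 /=.
  case/orP: H' => [-> //|/existsP[e' /andP[]]]; rewrite inE => /andP[h1 h2] h3.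
  by apply/andP; split; apply/orP; right; apply/existsP; exists e'; rewrite ?h1 ?h2 h3.
Qed.


Definition cutsz (Y : {set E}) n := exists A, cutf A Y t /\ #|A| = n.
Lemma gex (Y : {set E}) : exists n, pb (cutsz Y n).
Proof. by exists #|Y|; apply/pbP; exists Y; split => //; apply: cut_self. Qed.
Definition g (Y : {set E}) := ex_minn (gex Y).

Lemma g_spec (Y : {set E}) : exists A, cutf A Y t /\ #|A| = g Y.
Proof. by rewrite /g; case: ex_minnP => n /pbP. Qed.

Lemma g_min (Y A : {set E}) : cutf A Y t -> (g Y <= #|A|)%N.
Proof.
rewrite /g; case: ex_minnP => n _ Hm HA; apply: Hm; apply/pbP; by exists A.
Qed.

Lemma g_card (Y : {set E}) : (g Y <= #|Y|)%N.
Proof. exact/g_min/cut_self. Qed.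

Lemma g_mono (X Y : {set E}) : X \subset Y -> (g X <= g Y)%N.
Proof.
move=> sub; case: (g_spec Y) => A [HA <-]; apply: g_min; exact: cut_monoX HA.
Qed.

Lemma g_add1 e (Y : {set E}) : (g (e |: Y) <= (g Y).+1)%N.
Proof.
case: (g_spec Y) => A [HA <-].
apply: (@leq_trans #|e |: A|); last by rewrite cardsU1; case: (e \in A).
apply: g_min => e0 p Hp H0 Hl; move: H0; rewrite in_setU1 => /orP[/eqP->|e0Y].
  by rewrite /= in_setU1 eqxx.
case/hasP: (HA e0 p Hp e0Y Hl) => a aI aA; apply/hasP; exists a => //.
by move: aA; rewrite !inE => ->; rewrite orbT.
Qed.

Lemma g_submod (A B : {set E}) : (g (A :|: B) + g (A :&: B) <= g A + g B)%N.
Proof.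
case: (g_spec A) => CA [HA <-]; case: (g_spec B) => CB [HB <-].
have HA' y : y \in A -> y \notin Nset CA by exact: cut_Nset HA.
have HB' y : y \in B -> y \notin Nset CB by exact: cut_Nset HB.
move: HA' HB' (bd_sub CA) (bd_sub CB).
move: (Nset CA) (Nset CB) => Z1 Z2 HA' HB' sA sB.
apply: (@leq_trans (#|bd (Z1 :&: Z2)| + #|bd (Z1 :|: Z2)|)).
  apply: leq_add; apply: g_min; apply: bd_cut; rewrite disjoint_subset;
    apply/subsetP => x; rewrite !inE => H0; apply/negP; move: H0.
    case/orP => [xA|xB] /andP[h1 h2].
      by move: h1; rewrite (negbTE (HA' _ xA)).
    by move: h2; rewrite (negbTE (HB' _ xB)).
  case/andP => xA xB /orP[h|h].
    by move: h; rewrite (negbTE (HA' _ xA)).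
  by move: h; rewrite (negbTE (HB' _ xB)).
rewrite addnC; apply: (leq_trans (bd_submod Z1 Z2)).
by apply: leq_add; apply: subset_leq_card.
Qed.

Lemma augment (rho : {set E}) k : g rho = k -> (k < g setT)%N ->
  exists e, g (e |: rho) = k.+1.
Proof.
move=> Hg Hlt; apply: NNPP => Hn.
have H1 : forall e, (g (e |: rho) <= k)%N.
  move=> e; have := g_add1 e rho; rewrite Hg leq_eqVlt ltnS => /orP[/eqP He|//].
  by case: Hn; exists e.
have H2 : forall s : seq E, (g (rho :|: [set x in s]) <= k)%N.
  elim=> [|e s IH].
    have -> : rho :|: [set x in [::]] = rho by apply/setP => x; rewrite !inE orbF.
    by rewrite Hg.
  have := g_submod (rho :|: [set x in s]) (e |: rho).
  have -> : (rho :|: [set x in s]) :|: (e |: rho) = rho :|: [set x in e :: s].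
    by apply/setP => x; rewrite !inE; case: (x \in rho); case: (x == e); case: (x \in s).
  have Hk : (k <= g ((rho :|: [set x in s]) :&: (e |: rho)))%N.
    rewrite -Hg; apply: g_mono; apply/subsetP => x xr; by rewrite !inE xr !orbT.
  move=> Hs; have := leq_add IH (H1 e); move: Hk Hs; set a := g _; set b := g _.
  move=> Hk Hs Hs2; have := leq_trans Hs Hs2; lia.
have := H2 (enum E).
have -> : rho :|: [set x in enum E] = setT by apply/setP => x; rewrite !inE mem_enum orbT.
by move=> H; move: (leq_trans Hlt H); rewrite ltnn.
Qed.


Lemma gT_ge (s : V) r : (forall c, is_Ct tail head s t c -> (r <= c)%N) ->
  (r <= g setT)%N.
Proof.
move=> Hc.
have ex : exists n, pb (exists A, node_cut tail head A s t /\ #|A| = n).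
  exists #|[set: E]|; apply/pbP; exists setT; split => // e0 p _ _ _.
  by rewrite /= inE.
case: (g_spec setT) => A [HA <-].
have Hct : is_Ct tail head s t (ex_minn ex).
  case: ex_minnP => n /pbP Hn Hm; split => // B HB; apply: Hm; apply/pbP; by exists B.
apply: (leq_trans (Hc _ Hct)).
case: ex_minnP => n _ Hm; apply: Hm; apply/pbP; exists A; split => //.
by move=> e0 p Hp _ Hl; apply: HA => //; rewrite inE.
Qed.

Definition cand r (xi rho : {set E}) := [/\ #|rho| = r, g rho = r & cutf rho xi t].

Lemma cand_exists r (xi : {set E}) : (r <= g setT)%N -> E_t tail head t r xi ->
  exists rho, cand r xi rho.
Proof.
move=> HT [m [[[A0 [HA0 cA0]] Hmin] Hmr]].
have gA0 : g A0 = m.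
  apply/eqP; rewrite eqn_leq -{1}cA0 g_card /=.
  case: (g_spec A0) => B [HB <-]; apply: Hmin; exact: cut_trans HA0 HB.
have : forall n, (m + n <= r)%N -> exists rho, cand (m + n) xi rho.
  elim=> [|n IH] Hn; first by exists A0; rewrite addn0.
  have Hn' : (m + n <= r)%N by rewrite addnS in Hn; exact: ltnW.
  case: (IH Hn') => rho [c1 c2 c3].
  have Hlt : (m + n < g setT)%N by apply: leq_trans HT; rewrite -addnS.
  case: (augment c2 Hlt) => e He.
  exists (e |: rho); rewrite addnS; split => //.
    apply/eqP; rewrite eqn_leq; apply/andP; split.
      by rewrite cardsU1 c1; case: (e \in rho).
    by rewrite -He; exact: g_card.
  by apply: cut_mono c3; apply/subsetP => x xr; rewrite !inE xr orbT.
move/(_ (r - m)); rewrite subnKC //; case/(_ (leqnn r)) => rho H; by exists rho.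
Qed.

Lemma Nset_sub (B rho : {set E}) : cutf B rho t -> Nset B \subset Nset rho.
Proof.
move=> HB; apply/subsetP => e; rewrite !inE => /pbP[p [Hp Hl Hn]]; apply/pbP.
exists p; split => //; apply/negP => /hasP[a aI aA].
case: (dp_suffix Hp aI) => q [Hq Hlq Hsub].
case/hasP: (HB a q Hq aA (etrans (congr1 head Hlq) Hl)) => b bI bB.
by move/negP: Hn; apply; apply/hasP; exists b => //; apply: Hsub.
Qed.

Lemma cand_primary r (xi : {set E}) : forall n rho, (#|Nset rho| <= n)%N ->
  cand r xi rho -> exists rho', cand r xi rho' /\ primary_for tail head rho' t.
Proof.
elim=> [|n IH] rho Hn [c1 c2 c3];
  case: (classic (exists B, min_cut_from tail head B rho t /\
                   exists b, b \in B /\ b \in Nset rho)).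
- move=> [B [_ [b [_ bN]]]]; move: Hn; rewrite leqn0 cards_eq0 => /eqP H0.
  by move: bN; rewrite H0 inE.
- move=> Hno; exists rho; split => //; split.
    split; first exact: cut_self.
    by move=> B HB; rewrite c1 -c2; apply: g_min.
  move=> B HB e0 p Hp e0B Hl; apply/negPn/negP => Hnh; apply: Hno; exists B; split => //.
  exists e0; split => //; rewrite inE; apply/pbP; by exists p.
- move=> [B [[HB HBmin] [b [bB bN]]]].
  have cB : #|B| = r.
    apply/eqP; rewrite eqn_leq -{1}c1 (HBmin rho (@cut_self rho)) /= -c2.
    exact: g_min.
  have candB : cand r xi B.
    split => //; last exact: cut_trans c3 HB.
    apply/eqP; rewrite eqn_leq -{1}cB g_card /= -{1}c2.
    case: (g_spec B) => C [HC <-]; apply: g_min; exact: cut_trans HB HC.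
  apply: (IH B) => //.
  have Hp : Nset B \proper Nset rho.
    apply/properP; split; first exact: Nset_sub.
    exists b => //; apply: cut_Nset bB; exact: cut_self.
  by rewrite -ltnS; apply: leq_trans Hn; apply: proper_card.
- move=> Hno; exists rho; split => //; split.
    split; first exact: cut_self.
    by move=> B HB; rewrite c1 -c2; apply: g_min.
  move=> B HB e0 p Hp e0B Hl; apply/negPn/negP => Hnh; apply: Hno; exists B; split => //.
  exists e0; split => //; rewrite inE; apply/pbP; by exists p.
Qed.

Lemma graph_main (s : V) r (xi : {set E}) :
  (forall c, is_Ct tail head s t c -> (r <= c)%N) -> E_t tail head t r xi ->
  exists rho, A_t tail head t r rho /\ cutf rho xi t.
Proof.
move=> Hc HE; case: (cand_exists (gT_ge Hc) HE) => rho Hr.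
case: (cand_primary (leqnn _) Hr) => rho' [[c1 _ c3] Hp].
by exists rho'.
Qed.

End Graph.

Import GRing.Theory.
Local Open Scope ring_scope.

Section WF.
Variables (V E : finType) (tail head : E -> V).
Hypothesis acyc : acyclic tail head.
Local Notation dp := (dpath tail head).

Lemma dp_uniq p e0 : dp e0 p -> uniq (e0 :: p).
Proof.
elim: p e0 => [|e1 p IH] e0 Hp //.
rewrite cons_uniq IH; last by move: Hp; rewrite /dpath /= => /andP[].
rewrite andbT; apply/negP => Hin; move: Hp.
case/splitPr: Hin => p1 p2; rewrite /dpath cat_path /= => /and3P[H1 H2 _].
by move: (acyc H1); rewrite eq_sym H2.
Qed.

Definition Rp (d e : E) : Prop := head d = tail e.

Lemma acc_bound n : forall e, (forall e0 p, dp e0 p -> last e0 p = e -> (size p < n)%N) ->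
  Acc Rp e.
Proof.
elim: n => [|n IH] e H; first by have := H e [::] isT erefl.
constructor => d hd; apply: IH => e0 p Hp Hl.
have := H e0 (rcons p e); rewrite size_rcons ltnS last_rcons; apply => //.
by rewrite /dpath rcons_path -/(dp e0 p) Hp /= Hl hd eqxx.
Qed.

Lemma Rp_wf : well_founded Rp.
Proof.
move=> e; apply: (@acc_bound #|E|) => e0 p Hp _.
have /card_uniqP U := dp_uniq Hp.
by have := max_card (mem (e0 :: p)); rewrite U.
Qed.
End WF.

Import GRing.Theory.
Local Open Scope ring_scope.

Section Alg.
Variables (V E : finType) (tail head : E -> V) (s t : V) (F : finFieldType) (w : nat).
Variables (ks : 'I_w -> E -> F) (k : E -> E -> F) (f : E -> 'I_w + E -> F).
Hypothesis acyc : acyclic tail head.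
Hypothesis Hgek : is_gek tail head s ks k f.
Local Notation dp := (dpath tail head).
Local Notation cutf := (cut_from tail head).

Definition predv (Y : E -> F) e : F :=
  if tail e == s then 0 else \sum_(d | head d == tail e) k d e * Y d.
Definition Yv (v : {ffun E -> F}) e : F := \sum_d v d * f e (inr d).

Lemma Yv_rec v e : Yv v e = predv (Yv v) e + v e.
Proof.
rewrite /Yv /predv.
under eq_bigr => d _ do rewrite Hgek mulrDr.
rewrite big_split /=; congr (_ + _).
  case: ifP => _.
    apply: big1 => d _; rewrite big1 ?mulr0 // => i _.
    by rewrite /unitv /= mulr0.
  under eq_bigr => d _ do rewrite mulr_sumr.
  rewrite exchange_big /=; apply: eq_bigr => d _; rewrite mulr_sumr.
  by apply: eq_bigr => d' _; rewrite mulrCA.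
rewrite (bigD1 e) //= big1 ?addr0.
  by rewrite /unitv eqxx mulr1.
by move=> d /negbTE nd; rewrite /unitv; case: eqP => [[]/eqP|]; rewrite ?nd // mulr0.
Qed.

Lemma zero_rec (c : E -> bool) (D : E -> F) :
  (forall e, D e = if c e then \sum_(d | head d == tail e) k d e * D d else 0) ->
  forall e, D e = 0.
Proof.
move=> H e; elim/(well_founded_induction (Rp_wf acyc)): e => e IH.
rewrite H; case: (c e) => //; apply: big1 => d /eqP hd.
by rewrite IH ?mulr0.
Qed.

Lemma predv_sub (Y1 Y2 : E -> F) e :
  predv Y1 e - predv Y2 e = predv (fun d => Y1 d - Y2 d) e.
Proof.
rewrite /predv; case: ifP => _; first by rewrite subr0.
by rewrite -sumrB; apply: eq_bigr => d _; rewrite mulrBr.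
Qed.

Lemma reroute (rho xi : {set E}) (z : {ffun E -> F}) :
  cutf rho xi t -> matches z xi ->
  exists zeta, matches zeta rho /\ forall e, head e = t -> Yv zeta e = Yv z e.
Proof.
move=> Hcut Hz.
pose Tm (Y : {ffun E -> F}) : {ffun E -> F} :=
  [ffun e => Y e - (if e \in rho then 0 else predv Y e)].
have Tinj : injective Tm.
  move=> Y1 Y2 H; apply/ffunP => e; apply/eqP; rewrite -subr_eq0; apply/eqP.
  pose D := fun d => Y1 d - Y2 d.
  have HD : forall e, D e = if (e \notin rho) && (tail e != s)
      then \sum_(d | head d == tail e) k d e * D d else 0.
    move=> e'; have := congr1 (fun Y : {ffun E -> F} => Y e') H; rewrite !ffunE.
    rewrite /D => /eqP; rewrite subr_eq => /eqP ->.
    case: (e' \in rho) => /=; first by rewrite !subr0 addr0 subrr.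
    rewrite -[Y2 e' - _ + _]addrA (addrC (Y2 e')) addrK addrC predv_sub /predv.
    by case: (tail e' == s).
  exact: (zero_rec HD).
case: (injF_bij Tinj) => Tinv _ HT.
pose c : {ffun E -> F} := [ffun e => if e \in rho then Yv z e else 0].
pose Y' := Tinv c.
have HY'e : forall e, Y' e - (if e \in rho then 0 else predv Y' e) = c e.
  by move=> e; rewrite -(HT c) /Tm ffunE.
pose zeta : {ffun E -> F} := [ffun e => if e \in rho then Yv z e - predv Y' e else 0].
have HY' : forall e, Y' e = predv Y' e + zeta e.
  move=> e; have := HY'e e; rewrite /zeta /c !ffunE.
  case: (e \in rho); first by rewrite subr0 => ->; rewrite addrC subrK.
  by move/eqP; rewrite subr_eq0 addr0 => /eqP.
have HYz : forall e, Y' e = Yv zeta e.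
  move=> e; apply/eqP; rewrite -subr_eq0; apply/eqP; move: e.
  apply: (@zero_rec (fun e => tail e != s)) => e.
  rewrite /=; have h1 := Yv_rec zeta e; have h2 := HY' e; rewrite h2 h1.
  rewrite [predv (Yv zeta) e + _]addrC addrKA predv_sub /predv; by case: (tail e == s).
have Hreg : forall e, (e \in rho) || (e \in Nset tail head t rho) -> Y' e = Yv z e.
  move=> e; elim/(well_founded_induction (Rp_wf acyc)): e => e IH.
  case eR: (e \in rho) => /= HN.
    by have := HY'e e; rewrite eR subr0 ffunE eR.
  have ze : z e = 0.
    apply: Hz; apply/negP => exi; move: HN; apply/negP; exact: cut_Nset Hcut exi.
  rewrite HY' Yv_rec ze /zeta ffunE eR !addr0 /predv; case: ifP => // _.
  apply: eq_bigr => d /eqP hd; congr (_ * _); apply: IH => //.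
  case dR: (d \in rho) => //=.
  move: HN; rewrite !inE => /pbP[p [Hp Hl Hn]]; apply/pbP; exists (e :: p); split => //.
    by rewrite /dpath /= hd eqxx.
  by rewrite /= dR.
exists zeta; split.
  by move=> e /negbTE eR; rewrite ffunE eR.
move=> e He; rewrite -HYz; apply: Hreg.
case eR: (e \in rho) => //=; rewrite inE; apply/pbP; exists [::]; split => //=.
by rewrite eR.
Qed.

Lemma received_Yv (x : {ffun 'I_w -> F}) (z : {ffun E -> F}) e :
  received f x z e = \sum_(i < w) x i * f e (inl i) + Yv z e.
Proof. by []. Qed.

End Alg.


Local Close Scope ring_scope.

Theorem theorem11 (V E : finType) (tail head : E -> V) (s : V) (T : {set V})
    (F : finFieldType) (w : nat) (ks : 'I_w -> E -> F) (k : E -> E -> F)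
    (f : E -> 'I_w + E -> F) (t : V) (r : nat) :
  network tail head s T ->
  (0 < w)%N ->
  is_gek tail head s ks k f ->
  t \in T ->
  \rank (Phi_mx head f t) = w ->
  (forall c, is_Ct tail head s t c -> (r <= c)%N) ->
  (corrects head f t (Zset (A_t tail head t r)) <->
   corrects head f t (Zset (E_t tail head t r))).
Proof.
move=> [acyc _ _ _] _ Hgek _ _ Hc; split.
- move=> HA x x' z z' [xi [Hxi Hz]] [xi' [Hxi' Hz']] Hrec.
  case: (graph_main Hc Hxi) => rho [Hrho Hcut].
  case: (graph_main Hc Hxi') => rho' [Hrho' Hcut'].
  case: (reroute acyc Hgek Hcut Hz) => zeta [Hzeta HY].
  case: (reroute acyc Hgek Hcut' Hz') => zeta' [Hzeta' HY'].
  apply: (HA x x' zeta zeta'); [by exists rho | by exists rho' |].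
  move=> e He; rewrite !received_Yv (HY e He) (HY' e He) -!received_Yv.
  exact: Hrec.
- move=> HE x x' z z' Hz Hz' Hrec; apply: (HE x x' z z') => //.
    case: Hz => xi [[Hcard [[_ Hmin] _]] Hm]; exists xi; split => //.
    exists r; split => //; split; first by exists xi; split => //; apply: cut_self.
    by move=> A HA; rewrite -Hcard; apply: Hmin.
  case: Hz' => xi [[Hcard [[_ Hmin] _]] Hm]; exists xi; split => //.
  exists r; split => //; split; first by exists xi; split => //; apply: cut_self.
  by move=> A HA; rewrite -Hcard; apply: Hmin.
Qed.
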